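(* Let $T_1=(Q_1,\Sigma,\Delta,R_1,q_1^0)$ and $T_2=(Q_2,\Delta,\Omega,R_2,q_2^0)$ be top-down tree transducers, let $A$ be the domain automaton of $T_2$, and let $\hat{T}_1$ be the product construction of $T_1$ and $A$. Let $s\in T_\Sigma$ and let $t$ be producible by the state $q_1$ of $T_1$ on input $s$. Let $S\subseteq Q_2$ be such that $t\in\bigcap_{q\in S}\text{dom}(q)$. Then $t$ is producible by the state $(q_1,S)$ of $\hat{T}_1$ on input $s$.
   Context: A top-down tree transducer $T=(Q,\Sigma,\Delta,R,q_0)$ has finite state set $Q$, ranked input/output alphabets $\Sigma,\Delta$, initial state $q_0$, and finite rule set $R$ of rules $q(a(x_1,\dots,x_k))\to t$ with $a\in\Sigma_k$ ($\Sigma_k$ = symbols of rank $k$) and $t$ a tree over $\Delta$ whose leaves may additionally be of the form $q'(x_i)$, $q'\in Q$, $i\in[k]$; rules are used as rewrite rules in the usual way. A state $q$ produces $t$ on input $s$ if the tree $t$ over $\Delta$ is derivable from $q(s)$; $\text{dom}(q)$ is the set of inputs on which $q$ produces some tree (an empty intersection of domains is the set of all trees). For $q\in Q$, $a\in\Sigma_k$, $\text{rhs}_T(q,a)$ is the set of right-hand sides of rules with left-hand side $q(a(x_1,\dots,x_k))$; for a set $\Gamma$ of right-hand sides, $\Gamma[x_i]$ is the set of $q'\in Q$ with $q'(x_i)$ occurring in some tree of $\Gamma$. Domain automaton of $T$: the top-down tree automaton (transducer over $\Sigma$ with rules of the form $p(a(x_1,\dots,x_k))\to a(p_1(x_1),\dots,p_k(x_k))$)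 with states all subsets of $Q$, initial state $\{q_0\}$, rules $S(a(x_1,\dots,x_k))\to a(S_1(x_1),\dots,S_k(x_k))$ for every $a\in\Sigma_k$, nonempty $S=\{q_1,\dots,q_n\}\subseteq Q$ and nonempty $\Gamma_j\subseteq\text{rhs}_T(q_j,a)$ ($j\in[n]$), where $S_i=\bigcup_j\Gamma_j[x_i]$, and rules $\emptyset(a(x_1,\dots,x_k))\to a(\emptyset(x_1),\dots,\emptyset(x_k))$ for all $a$. Product construction of transducers $T=(Q,\Sigma,\Delta,R,q_0)$ and $T'=(Q',\Delta,\Omega,R',q'_0)$: the transducer with states $Q\times Q'$, input $\Sigma$, output $\Omega$, initial state $(q_0,q'_0)$, and, for every rule $q(a(x_1,\dots,x_k))\to\xi$ of $T$, every $p\in Q'$ and every tree $\zeta$ derivable from $p(\xi)$ using rules of $T'$ in which the leaves of $\xi$ of the form $q''(x_i)$ are treated as unrewritable symbols and a state $p'$ applied to such a leaf stays as $p'(q''(x_i))$, the rule $(q,p)(a(x_1,\dots,x_k))\to\zeta'$, where $\zeta'$ is obtained from $\zeta$ by replacing each $p'(q''(x_i))$ by $(q'',p')(x_i)$. *)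

(* Defs.v *)
From Stdlib Require Import Relations.
From Stdlib Require List.
From mathcomp Require Import all_boot.
Set Implicit Arguments.
Unset Strict Implicit.
Unset Printing Implicit Defensive.

(** Ranked trees: a node carries a label and a list of children.
    Ranks are given by separate rank functions; [wfb ar t] says that every
    node labelled [l] has exactly [ar l] children. *)
Inductive tree (L : Type) : Type := Node : L -> seq (tree L) -> tree L.
Arguments Node {L} _ _.

Fixpoint wfb (L : Type) (ar : L -> nat) (t : tree L) : bool :=
  let: Node l cs := t in (size cs == ar l) && all (wfb ar) cs.

Fixpoint tsubst (A B C : Type) (f : B -> tree (A + C)) (t : tree (A + B))
  : tree (A + C) :=
  match t with
  | Node (inl a) cs => Node (inl a) (map (tsubst f) cs)
  | Node (inr b) _ => f b
  end.

Fixpoint embed (A X : Type) (t : tree A) : tree (A + X) :=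
  let: Node a cs := t in Node (inl a) (map (@embed A X) cs).

Fixpoint leaves (A B : Type) (t : tree (A + B)) : seq B :=
  match t with
  | Node (inl _) cs => flatten (map (@leaves A B) cs)
  | Node (inr b) _ => [:: b]
  end.

(** Right-hand sides: trees over the output alphabet whose leaves may be
    [q'(x_i)], encoded as [Node (inr (q', i)) [::]].  Variables are
    0-indexed: [x_1, ..., x_k] of the paper are [0, ..., k-1]. *)
Definition rhs (Q Out : Type) := tree (Out + (Q * nat)).

(** Sentential forms: trees over the output alphabet with leaves
    [q(s)] (state applied to an input tree), encoded [Node (inr (q, s)) [::]]. *)
Definition sform (Q In Out : Type) := tree (Out + (Q * tree In)).

Definition rhs_ar (Q Out : Type) (rkOut : Out -> nat) (l : Out + (Q * nat)) : nat :=
  match l with inl o => rkOut o | inr _ => 0 end.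

(** A set of rules is given as a predicate [rule q a r] meaning that
    [q(a(x_1,...,x_k)) -> r] is a rule. *)
Definition wf_rules (Q In Out : Type) (rkIn : In -> nat) (rkOut : Out -> nat)
  (rule : Q -> In -> rhs Q Out -> Prop) : Prop :=
  forall q a r, rule q a r ->
    wfb (@rhs_ar Q Out rkOut) r && all (fun b => b.2 < rkIn a) (leaves r).

Definition rules_of (Q In Out : Type) (R : seq (Q * In * rhs Q Out))
  : Q -> In -> rhs Q Out -> Prop :=
  fun q a r => List.In (q, a, r) R.

Section Semantics.
Variables (Q In Out : Type) (rkIn : In -> nat) (rule : Q -> In -> rhs Q Out -> Prop).

Definition inst (ss : seq (tree In)) (dflt : tree In) (b : Q * nat)
  : sform Q In Out := Node (inr (b.1, nth dflt ss b.2)) [::].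

Inductive step : sform Q In Out -> sform Q In Out -> Prop :=
| step_root q a ss r :
    rule q a r -> size ss = rkIn a ->
    step (Node (inr (q, Node a ss)) [::]) (tsubst (inst ss (Node a ss)) r)
| step_ctx o l1 u u' l2 :
    step u u' ->
    step (Node (inl o) (l1 ++ u :: l2)) (Node (inl o) (l1 ++ u' :: l2)).

Definition derives := clos_refl_trans _ step.

Definition produces (q : Q) (s : tree In) (t : tree Out) : Prop :=
  derives (Node (inr (q, s)) [::]) (embed _ t).

End Semantics.

Definition domain_rules (Q : finType) (In Out : Type) (rkIn : In -> nat)
  (rule : Q -> In -> rhs Q Out -> Prop)
  : {set Q} -> In -> rhs {set Q} In -> Prop :=
  fun S a r =>
    (S = set0 /\
       r = Node (inl a) [seq Node (inr (set0, i)) [::] | i <- iota 0 (rkIn a)])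
    \/
    (S != set0 /\
     exists (Gamma : Q -> seq (rhs Q Out)) (Si : nat -> {set Q}),
       (forall q, q \in S -> Gamma q <> [::] /\
                              forall g, List.In g (Gamma q) -> rule q a g) /\
       (forall i q', q' \in Si i <->
          exists q, q \in S /\ exists g, List.In g (Gamma q) /\ (q', i) \in leaves g) /\
       r = Node (inl a) [seq Node (inr (Si i, i)) [::] | i <- iota 0 (rkIn a)]).

(** Product construction of [T] (states [Q], [In -> Mid]) and [T']
    (states [Q'], [Mid -> Out]).  [T'] is run on a right-hand side [xi] of [T],
    i.e. on a tree over [Mid + (Q * nat)] whose extra leaves [q''(x_i)]
    have rank 0 and no rules (unrewritable). *)
Definition ext_rank (Q Mid : Type) (rkMid : Mid -> nat) (l : Mid + (Q * nat)) : nat :=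
  match l with inl m => rkMid m | inr _ => 0 end.

Definition ext_rules (Q Q' Mid Out : Type) (rule2 : Q' -> Mid -> rhs Q' Out -> Prop)
  : Q' -> Mid + (Q * nat) -> rhs Q' Out -> Prop :=
  fun p l r => match l with inl m => rule2 p m r | inr _ => False end.

(** [unconv z'] is the tree [zeta] obtained from [z'] by replacing each
    [(q'',p')(x_i)] by [p'(q''(x_i))]; so "[z'] is obtained from [zeta]" is
    [zeta = unconv z']. *)
Definition unconv (Q Q' Mid Out : Type) (z : rhs (Q * Q') Out)
  : sform Q' (Mid + (Q * nat)) Out :=
  tsubst (fun b : (Q * Q') * nat =>
            Node (inr (b.1.2, Node (inr (b.1.1, b.2)) [::])) [::]) z.

Definition product_rules (Q Q' In Mid Out : Type) (rkMid : Mid -> nat)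
  (rule1 : Q -> In -> rhs Q Mid -> Prop) (rule2 : Q' -> Mid -> rhs Q' Out -> Prop)
  : Q * Q' -> In -> rhs (Q * Q') Out -> Prop :=
  fun qp a z' =>
    exists xi, rule1 qp.1 a xi /\
      derives (@ext_rank Q Mid rkMid) (@ext_rules Q Q' Mid Out rule2)
        (Node (inr (qp.2, xi)) [::]) (@unconv Q Q' Mid Out z').

(* Main.v *)
Require Import Defs.
From mathcomp Require Import all_boot.
From Stdlib Require Import Relations ClassicalEpsilon.
From Stdlib Require List.
Import List (Forall2, Forall2(..)).

Definition tree_ind2 (L : Type) (P : tree L -> Prop)
  (H : forall l cs, (forall c, List.In c cs -> P c) -> P (Node l cs)) : forall t, P t :=
  fix F t := match t with Node l cs => H l cs
   ((fix G (cs : seq (tree L)) : forall c, List.In c cs -> P c :=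
      match cs return forall c, List.In c cs -> P c with
      | [::] => fun c (h : List.In c [::]) => False_ind _ h
      | c0 :: cs' => fun c h => match h with
           | or_introl e => eq_ind c0 P (F c0) c e
           | or_intror h' => G cs' c h' end end) cs) end.

Lemma nth_In' {T : Type} (d : T) (s : seq T) i : i < size s -> List.In (nth d s i) s.
Proof. elim: s i => [|x s IH] [|i] //= H; [left | right; apply: IH]; done. Qed.

Lemma Forall2_nth {A B : Type} (R : A -> B -> Prop) l1 l2 :
  Forall2 R l1 l2 <-> size l1 = size l2 /\ forall a b i, i < size l1 -> R (nth a l1 i) (nth b l2 i).
Proof.
split.
- elim=> [|x y l l' Hxy _ [IH1 IH2]] /=; first by split.
  split; first by rewrite IH1. by move=> a b [|i] //= Hi; apply: IH2.
- elim: l1 l2 => [|x l1 IH] [|y l2] //= [Hs Hn]; try by constructor. all: try discriminate.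
  constructor; first by apply: (Hn x y 0).
  apply: IH; split; first by case: Hs.
  by move=> a b i Hi; apply: (Hn a b i.+1).
Qed.

Lemma ex_seq {T : Type} (z0 : T) (P : nat -> T -> Prop) n :
  (forall i, i < n -> exists z, P i z) ->
  exists zs, size zs = n /\ forall i, i < n -> P i (nth z0 zs i).
Proof.
elim: n => [|n IH] H; first by exists [::].
have [zs [Hs Hz]] : exists zs, size zs = n /\ forall i, i < n -> P i (nth z0 zs i).
  by apply: IH => i Hi; apply: H; apply: ltnW.
have [z Hz'] := H n (ltnSn n).
exists (rcons zs z); split; first by rewrite size_rcons Hs.
move=> i Hi; rewrite nth_rcons Hs.
rewrite ltnS leq_eqVlt in Hi; case/orP: Hi => [/eqP ->|Hlt].
- by rewrite ltnn eqxx.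
- by rewrite Hlt; apply: Hz.
Qed.

Section Gen.
Variables (Q In Out : Type) (rkIn : In -> nat) (rule : Q -> In -> rhs Q Out -> Prop).
Local Notation D := (derives rkIn rule).

Lemma lift_app o l1 l2 {u u'} : D u u' ->
  D (Node (inl o) (l1 ++ u :: l2)) (Node (inl o) (l1 ++ u' :: l2)).
Proof.
elim=> [x y Hs|x|x y z _ H1 _ H2].
- by apply: rt_step; apply: step_ctx.
- by apply: rt_refl.
- by apply: rt_trans H2.
Qed.

Lemma ctx_lift o cs cs' : Forall2 D cs cs' -> D (Node (inl o) cs) (Node (inl o) cs').
Proof.
move=> H; suff: forall l1, D (Node (inl o) (l1 ++ cs)) (Node (inl o) (l1 ++ cs')) by move/(_ [::]).
elim: H => [|x y l l' Hxy _ IH] l1; first by apply: rt_refl.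
apply: rt_trans (lift_app o l1 l Hxy) _.
by have := IH (rcons l1 y); rewrite !cat_rcons.
Qed.

Lemma Forall2_refl' (cs : seq (sform Q In Out)) : Forall2 D cs cs.
Proof. by elim: cs => [|c cs IH]; constructor => //; apply: rt_refl. Qed.

Lemma Forall2_back l1 u u' l2 cs' : step rkIn rule u u' ->
  Forall2 D (l1 ++ u' :: l2) cs' -> Forall2 D (l1 ++ u :: l2) cs'.
Proof.
move=> Hs; elim: l1 cs' => [|x l1 IH] cs' /= H; inversion H; subst; constructor => //.
- by apply: rt_trans H2; apply: rt_step.
- by apply: IH.
Qed.

Lemma ctx_inv o cs G : D (Node (inl o) cs) G ->
  exists cs', G = Node (inl o) cs' /\ Forall2 D cs cs'.
Proof.
move=> H0; have H := clos_rt_rt1n _ _ _ _ H0; clear H0.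
remember (Node (inl o) cs) as x eqn:Hx; elim: H cs Hx => [x0|x0 y z Hs _ IH] cs Hx; subst.
- by exists cs; split => //; apply: Forall2_refl'.
- inversion Hs; subst.
  have [cs' [-> H']] := IH _ erefl.
  by exists cs'; split => //; apply: Forall2_back H'.
Qed.

Lemma leaf_inv q s G : D (Node (inr (q, s)) [::]) G ->
  G = Node (inr (q, s)) [::] \/
  exists a ss r, s = Node a ss /\ rule q a r /\ size ss = rkIn a /\
     D (tsubst (inst Out ss (Node a ss)) r) G.
Proof.
move=> H0; have H := clos_rt_rt1n _ _ _ _ H0; clear H0.
remember (Node (inr (q, s)) [::]) as x eqn:Hx; elim: H Hx => [x0|x0 y z Hs Hr _] Hx; subst.
- by left.
- inversion Hs; subst; right.
  by exists a, ss, r; do 3!split => //; apply: clos_rt1n_rt.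
Qed.

Lemma flatten_leaves_In {B : eqType} (cs : seq (tree (Out + B))) b :
  b \in flatten (map (@leaves Out B) cs) -> exists c, List.In c cs /\ b \in leaves c.
Proof.
elim: cs => [|c cs IH] //=; rewrite mem_cat => /orP [H|H].
- by exists c; split => //; left.
- by have [c' [H1 H2]] := IH H; exists c'; split => //; right.
Qed.

Lemma Forall2_map_In {A B C E : Type} {R : C -> E -> Prop} {f : A -> C} {g : B -> E} {l1 l2 x} :
  Forall2 R (map f l1) (map g l2) -> List.In x l1 -> exists y, R (f x) (g y).
Proof.
elim: l1 l2 => [|a l1 IH] [|b l2] //= H; inversion H as [|c d l1' l2' Hcd HF]; subst.
move=> [<-|Hin]; first by exists b.
exact: (IH l2 HF Hin).
Qed.

Lemma leaves_dom {B : eqType} (f : B -> sform Q In Out) (r : tree (Out + B)) u :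
  D (tsubst f r) (embed _ u) -> forall b, b \in leaves r -> exists u', D (f b) (embed _ u').
Proof.
elim/tree_ind2: r u => [[o|b'] cs IH] u /=.
- move=> /ctx_inv [cs' [Heq HF]] b /flatten_leaves_In [c [Hc Hb]].
  case: u Heq => o' us /= [_ Hcs]; subst cs'.
  have [y Hy] := Forall2_map_In HF Hc.
  by apply: IH Hc y Hy b Hb.
- by move=> H b; rewrite inE => /eqP ->; exists u.
Qed.

End Gen.
Arguments ctx_lift {Q In Out rkIn rule o cs cs'}.
Arguments ctx_inv {Q In Out rkIn rule o cs G}.
Arguments leaf_inv {Q In Out rkIn rule q s G}.
Arguments leaves_dom {Q In Out rkIn rule B f r u} _ {b}.
Set Implicit Arguments.

Lemma dom_step (Q2 : finType) (Delta Omega : Type) (rkD : Delta -> nat)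
  (R2 : seq (Q2 * Delta * rhs Q2 Omega)) (S : {set Q2}) (d : Delta) (ts : seq (tree Delta)) :
 (forall q, q \in S -> exists u : tree Omega, produces rkD (rules_of R2) q (Node d ts) u) ->
 exists Si : nat -> {set Q2},
  domain_rules rkD (rules_of R2) S d
     (Node (inl d) [seq Node (inr (Si i, i)) [::] | i <- iota 0 (rkD d)]) /\
  (forall j q', q' \in Si j ->
     exists u : tree Omega, produces rkD (rules_of R2) q' (nth (Node d ts) ts j) u).
Proof.
move=> Hdom.
case: (eqVneq S set0) => [->|Sn0].
- exists (fun _ => set0); split; first by left.
  by move=> j q'; rewrite inE.
- have Hg : forall q, exists g : rhs Q2 Omega, q \in S -> rules_of R2 q d g /\
     exists u, derives rkD (rules_of R2) (tsubst (inst Omega ts (Node d ts)) g) (embed _ u).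
  { move=> q; case: (boolP (q \in S)) => Hq; last by exists (Node (inr (q,0)) [::]).
    have [u Hu] := Hdom q Hq.
    case: (leaf_inv Hu) => [|[a [ss [r [Ea [Hr [_ Hd]]]]]]].
    + by case: u {Hu}.
    + case: Ea => Ea1 Ea2; subst.
      by exists r => _; split => //; exists u. }
  pose gf q := proj1_sig (constructive_indefinite_description _ (Hg q)).
  have Hgf q : q \in S -> rules_of R2 q d (gf q) /\
     exists u, derives rkD (rules_of R2) (tsubst (inst Omega ts (Node d ts)) (gf q)) (embed _ u).
    exact: (proj2_sig (constructive_indefinite_description _ (Hg q))).
  exists (fun i => [set q' | [exists q in S, (q', i) \in leaves (gf q)]]).
  split.
  + right; split => //.
    exists (fun q => [:: gf q]), (fun i => [set q' | [exists q in S, (q', i) \in leaves (gf q)]]).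
    split; [|split].
    * move=> q Hq; split => //; move=> g [<-|[]]; exact: (Hgf q Hq).1.
    * move=> i q'; rewrite inE; split.
      - move=> /existsP [q /andP [Hq Hl]]; exists q; split => //; exists (gf q); split => //; by left.
      - move=> [q [Hq [g [Hin Hl]]]]; apply/existsP; exists q; rewrite Hq /=; case: Hin Hl => [->|[]] //.
    * done.
  + move=> j q'; rewrite inE => /existsP [q /andP [Hq Hl]].
    have [_ [u Hu]] := Hgf q Hq.
    exact: (leaves_dom Hu Hl).
Qed.

Lemma all_leaves_child {A B : Type} (p : B -> bool) (cs : seq (tree (A + B))) c :
  all p (flatten (map (@leaves A B) cs)) -> List.In c cs -> all p (leaves c).
Proof.
elim: cs => [|c0 cs IH] //= ; rewrite all_cat => /andP [H1 H2] [<-|Hin] //.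
exact: IH.
Qed.

Lemma xi_lemma (Q1 Q2 : finType) (Sigma Delta Omega : Type) (rkS : Sigma -> nat)
  (rkD : Delta -> nat) (R1 : seq (Q1 * Sigma * rhs Q1 Delta))
  (R2 : seq (Q2 * Delta * rhs Q2 Omega)) (a : Sigma) (ss : seq (tree Sigma)) :
  (forall i, i < size ss -> forall q t (S : {set Q2}),
     produces rkS (rules_of R1) q (nth (Node a ss) ss i) t ->
     (forall q', q' \in S -> exists u : tree Omega, produces rkD (rules_of R2) q' t u) ->
     produces rkS (product_rules rkD (rules_of R1) (domain_rules rkD (rules_of R2)))
       (q, S) (nth (Node a ss) ss i) t) ->
  forall (xi : rhs Q1 Delta) (t : tree Delta) (S : {set Q2}),
    wfb (@rhs_ar Q1 Delta rkD) xi -> all (fun b => b.2 < size ss) (leaves xi) ->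
    derives rkS (rules_of R1) (tsubst (inst Delta ss (Node a ss)) xi) (embed _ t) ->
    (forall q', q' \in S -> exists u : tree Omega, produces rkD (rules_of R2) q' t u) ->
    exists z' : rhs (Q1 * {set Q2}) Delta,
      derives (@ext_rank Q1 Delta rkD)
        (@ext_rules Q1 {set Q2} Delta Delta (domain_rules rkD (rules_of R2)))
        (Node (inr (S, xi)) [::]) (@unconv Q1 {set Q2} Delta Delta z') /\
      derives rkS (product_rules rkD (rules_of R1) (domain_rules rkD (rules_of R2)))
        (tsubst (inst Delta ss (Node a ss)) z') (embed _ t).
Proof.
move=> IHs; elim/tree_ind2 => [[d|[q'' i]] cs IH] t S Hwf Hlv Hder Hdom.
- move: Hder => /= /ctx_inv [cs' [Heq HF]].
  case: t Heq Hdom => d' ts /= [Ed Ecs] Hdom; subst d' cs'.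
  move/Forall2_nth: HF => [Hsz HF]; rewrite !size_map in Hsz.
  have [Si [Hrule Hch]] := dom_step Hdom.
  move: Hwf => /= /andP [/eqP Hk Hwfc].
  pose c0 := Node (inl d) cs.
  pose z0 : rhs (Q1 * {set Q2}) Delta := Node (inl d) [::].
  pose P := (fun j (z : rhs (Q1 * {set Q2}) Delta) =>
      derives (@ext_rank Q1 Delta rkD)
        (@ext_rules Q1 {set Q2} Delta Delta (domain_rules rkD (rules_of R2)))
        (Node (inr (Si j, nth c0 cs j)) [::]) (@unconv Q1 {set Q2} Delta Delta z) /\
      derives rkS (product_rules rkD (rules_of R1) (domain_rules rkD (rules_of R2)))
        (tsubst (inst Delta ss (Node a ss)) z) (embed _ (nth (Node d ts) ts j))).
  have Hex : forall j, j < size cs -> exists z, P j z.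
  { move=> j Hj.
    apply: (IH (nth c0 cs j)).
    * exact: nth_In'.
    * exact: (elimT (all_nthP c0) Hwfc j Hj).
    * have Hlv' : all (fun b : Q1 * nat => b.2 < size ss) (flatten (map (@leaves Delta (Q1 * nat)) cs)) := Hlv.
      exact: (@all_leaves_child _ _ _ cs (nth c0 cs j) Hlv' (nth_In' c0 cs j Hj)).
    * have := HF (tsubst (inst Delta ss (Node a ss)) c0) (embed _ (Node d ts)) j.
      rewrite size_map (nth_map c0) // (nth_map (Node d ts)) -?Hsz //; apply; done.
    * move=> q' Hq'; exact: Hch j q' Hq'. }
  have [zs [Hzs Hz]] := ex_seq z0 P (size cs) Hex.
  exists (Node (inl d) zs); split.
  + apply: rt_trans.
      apply: rt_step.
      exact: (@step_root _ _ _ _ _ S (inl d) cs _ Hrule Hk).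
      rewrite /unconv /=; apply: ctx_lift; apply/Forall2_nth.
      rewrite !size_map size_iota -Hk Hzs; split => // x y j Hj.
      rewrite ?size_map ?size_iota in Hj.
      rewrite -map_comp (nth_map 0) ?size_iota // nth_iota //.
      rewrite (nth_map z0) ?Hzs //=.
      exact: (Hz j Hj).1.
  + rewrite /=; apply: ctx_lift; apply/Forall2_nth.
      rewrite !size_map Hzs Hsz; split => // x y j Hj.
      rewrite ?size_map ?Hzs in Hj.
      have Hj' : j < size cs by rewrite Hsz.
      rewrite (nth_map z0) ?Hzs // (nth_map (Node d ts)) //.
      exact: (Hz j Hj').2.
- move: Hwf => /= /andP [Hcs _]; move: Hcs => /eqP Hcs; move: Hcs; case: cs IH Hder Hlv => // _ Hder Hlv _.
  move: Hlv => /= /andP [Hi _].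
  exists (Node (inr ((q'', S), i)) [::]); split; first by apply: rt_refl.
  exact: (IHs i Hi q'' t S Hder Hdom).
Qed.
Unset Implicit Arguments.

Theorem lemma13 (Q1 Q2 : finType) (Sigma Delta Omega : Type)
  (rkS : Sigma -> nat) (rkD : Delta -> nat) (rkO : Omega -> nat)
  (R1 : seq (Q1 * Sigma * rhs Q1 Delta)) (R2 : seq (Q2 * Delta * rhs Q2 Omega)) :
  wf_rules rkS rkD (rules_of R1) ->
  wf_rules rkD rkO (rules_of R2) ->
  forall (s : tree Sigma) (t : tree Delta) (q1 : Q1) (S : {set Q2}),
    wfb rkS s ->
    produces rkS (rules_of R1) q1 s t ->
    (forall q, q \in S -> exists u : tree Omega, produces rkD (rules_of R2) q t u) ->
    produces rkS
      (product_rules rkD (rules_of R1) (domain_rules rkD (rules_of R2)))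
      (q1, S) s t.
Proof.
move=> wf1 _ s; elim/tree_ind2: s => a ss IH t q1 S Hwf Hp Hdom.
case: (leaf_inv Hp) => [|[a' [ss' [xi [Es [Hr [Hsz Hd]]]]]]]; first by case: t {Hp Hdom}.
case: Es => E1 E2; subst a' ss'.
have /andP [Hwfxi Hlv] := wf1 _ _ _ Hr.
move: Hwf => /= /andP [/eqP Hss Hwfss].
rewrite -Hss in Hlv.
have IHs : forall i, i < size ss -> forall q t (S : {set Q2}),
     produces rkS (rules_of R1) q (nth (Node a ss) ss i) t ->
     (forall q', q' \in S -> exists u : tree Omega, produces rkD (rules_of R2) q' t u) ->
     produces rkS (product_rules rkD (rules_of R1) (domain_rules rkD (rules_of R2)))
       (q, S) (nth (Node a ss) ss i) t.
  move=> i Hi q t' S' Hp' Hdom'.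
  apply: IH => //; first exact: nth_In'.
  exact: (elimT (all_nthP (Node a ss)) Hwfss i Hi).
have [z' [HA Hh]] := @xi_lemma Q1 Q2 Sigma Delta Omega rkS rkD R1 R2 a ss IHs xi t S Hwfxi Hlv Hd Hdom.
apply: rt_trans; last exact: Hh.
apply: rt_step; apply: (@step_root _ _ _ _ _ (q1, S) a ss z') => //.
by exists xi; split.
Qed.
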